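(* Consider the Gaussian crossed effect model with $K=2$, $L=1$ and balanced levels, and suppose that the number of edges of $G_{\boldsymbol{Q}}$ is at least $c_1N$ and at most $c_2 N$ for constants $0<c_1\le c_2$. Then for every ordering of the $M=p+1$ scalar variables in $\boldsymbol{\theta}$, $\mathrm{Cost(SLA)}\ge c\,N\bar n$, where $c>0$ depends only on $c_1$.
   Context: Model: observations $y_j\sim\mathcal{N}(a^{(0)}+a^{(1)}_{i_1[j]}+a^{(2)}_{i_2[j]},\tau^{-1})$, $j=1,\dots,N$, with $a^{(k)}_i\sim\mathcal{N}(0,\tau_k^{-1})$ for $i=1,\dots,I_k$, $k=1,2$, and $a^{(0)}\sim\mathcal{N}(\mu_{pr},T_{pr}^{-1})$; $\boldsymbol{\theta}=(a^{(0)},\boldsymbol{a}^{(1)},\boldsymbol{a}^{(2)})$ has $M=1+p$ entries, $p=I_1+I_2$. Counts $n^{(k)}_i=\#\{j: i_k[j]=i\}$, $n^{(1,2)}_{ij}=\#\{n: i_1[n]=i,i_2[n]=j\}$. The posterior precision $\boldsymbol{Q}$ has entries $\boldsymbol{Q}[a^{(0)},a^{(0)}]=T_{pr}+N\tau$, $\boldsymbol{Q}[a^{(0)},a^{(k)}_i]=n^{(k)}_i\tau$, $\boldsymbol{Q}[a^{(k)}_i,a^{(k)}_i]=\tau_k+n^{(k)}_i\tau$, $\boldsymbol{Q}[a^{(1)}_i,a^{(2)}_j]=n^{(1,2)}_{ij}\tau$, and all other entries zero. $G_{\boldsymbol{Q}}$ is the graph on the variables with an edge iff the corresponding off-diagonal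 entry of $\boldsymbol{Q}$ is nonzero. Balanced levels: $n^{(k)}_i=N/I_k$ for all $k,i$. $\bar n=2N/p$. $\mathrm{Cost(SLA)}$ is the number of floating point operations to compute the Cholesky factor of $\boldsymbol{Q}$ (in the given ordering) by the column recursion $L_{mm}^2=Q_{mm}-\sum_{\ell<m}L_{m\ell}^2$, $L_{jm}=(Q_{jm}-\sum_{\ell<m}L_{j\ell}L_{m\ell})/L_{mm}$ ($j>m$), computing only entries in the potential nonzero pattern (entries $(j,m)$, $j\ge m$, such that $j=m$ or some path from $m$ to $j$ in $G_{\boldsymbol{Q}}$ has all intermediate vertices preceding $m$) and skipping operations with structurally zero entries. *)

(* Defs.v *)
From HB Require Import structures.
From mathcomp Require Import all_boot all_order all_algebra all_fingroup.
Set Implicit Arguments. Unset Strict Implicit. Unset Printing Implicit Defensive.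
Import Order.TTheory GRing.Theory Num.Theory.
Local Open Scope ring_scope.

(* Variables theta are indexed by 'I_(1 + I1 + I2) (as nats):                  *)
(*   0            <-> a^(0)                                                    *)
(*   1 .. I1      <-> a^(1)_(v-1)                                              *)
(*   I1+1 .. I1+I2 <-> a^(2)_(v-1-I1)                                          *)

Section Model.
Variables (I1 I2 N : nat) (i1 : 'I_N -> 'I_I1) (i2 : 'I_N -> 'I_I2).

Definition cnt1 (i : nat) : nat := #|[set j : 'I_N | (i1 j : nat) == i]|.
Definition cnt2 (i : nat) : nat := #|[set j : 'I_N | (i2 j : nat) == i]|.
Definition cnt12 (i k : nat) : nat :=
  #|[set j : 'I_N | ((i1 j : nat) == i) && ((i2 j : nat) == k)]|.

Definition blk (v : nat) : nat := if v == 0%N then 0%N else if (v <= I1)%N then 1%N else 2%N.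
Definition lvl (v : nat) : nat := if (v <= I1)%N then v.-1 else (v - 1 - I1)%N.

Variables (R : realFieldType) (tau tau1 tau2 Tpr : R).

Definition Qentry (u v : nat) : R :=
  match blk u, blk v return R with
  | 0%N, 0%N => Tpr + N%:R * tau
  | 0%N, 1%N => (cnt1 (lvl v))%:R * tau
  | 1%N, 0%N => (cnt1 (lvl u))%:R * tau
  | 0%N, 2%N => (cnt2 (lvl v))%:R * tau
  | 2%N, 0%N => (cnt2 (lvl u))%:R * tau
  | 1%N, 1%N => if u == v then tau1 + (cnt1 (lvl u))%:R * tau else 0
  | 2%N, 2%N => if u == v then tau2 + (cnt2 (lvl u))%:R * tau else 0
  | 1%N, 2%N => (cnt12 (lvl u) (lvl v))%:R * tau
  | 2%N, 1%N => (cnt12 (lvl v) (lvl u))%:R * tau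
  | _, _ => 0
  end.

Definition Qmat : 'M[R]_(1 + I1 + I2) := \matrix_(u, v) Qentry u v.

End Model.

Definition num_edges (R : ringType) (M : nat) (Q : 'M[R]_M) : nat :=
  #|[set uv : 'I_M * 'I_M | (uv.1 < uv.2)%N && (Q uv.1 uv.2 != 0)]|.

(* adjacency of G_Q after reordering: position k holds the variable s k *)
Definition adjQ (R : ringType) (M : nat) (Q : 'M[R]_M) (s : {perm 'I_M}) : rel 'I_M :=
  fun k l => (k != l) && (Q (s k) (s l) != 0).

Section Chol.
Variables (M : nat) (adj : rel 'I_M).

Definition restr (m : 'I_M) : rel 'I_M :=
  fun x y => [&& adj x y, (x < m)%N & (y < m)%N].

(* (j, m), j >= m, is in the potential nonzero pattern of L *)
Definition fillP (m j : 'I_M) : bool :=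
  (j == m) ||
  ((m < j)%N &&
    (adj m j ||
     [exists u : 'I_M, exists v : 'I_M,
        [&& adj m u, (u < m)%N, (v < m)%N, connect (restr m) u v & adj v j]])).

(* flop count of the column recursion, restricted to the pattern:
   column m: 1 sqrt + 2 flops (mult, sub) per l < m with L_ml in pattern;
   each pattern entry L_jm, j > m: 1 division + 2 flops per l < m with
   L_jl and L_ml both in the pattern. *)
Definition chol_cost : nat :=
  \sum_(m < M)
    (1 + 2 * #|[set l : 'I_M | (l < m)%N && fillP l m]|
     + \sum_(j < M | (m < j)%N && fillP m j)
         (1 + 2 * #|[set l : 'I_M | [&& (l < m)%N, fillP l j & fillP l m]]|)).

End Chol.

(* Main.v *)
Require Import Defs.
From HB Require Import structures.
From mathcomp Require Import all_boot all_order all_algebra all_fingroup.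
From mathcomp Require Import zify.
Require Import Defs.
Set Implicit Arguments. Unset Strict Implicit. Unset Printing Implicit Defensive.

Lemma sq_sum (M : nat) (f : 'I_M -> nat) :
  (\sum_(i < M) f i) ^ 2 = \sum_(i < M) f i * f i
     + 2 * \sum_(i < M) \sum_(j < M) nat_of_bool (i < j)%N * (f i * f j).
Proof.
rewrite expnS expn1 big_distrlr /=.
have E : forall i j : 'I_M, f i * f j =
   (i < j)%N * (f i * f j) + (j < i)%N * (f j * f i) + (j == i) * (f i * f j).
  move=> i j; rewrite (mulnC (f j)); case: (ltngtP i j) => h.
  - have -> : (j == i) = false by apply/negbTE; rewrite neq_ltn h orbT.
    by rewrite mul1n mul0n !addn0.
  - have -> : (j == i) = false by apply/negbTE; rewrite neq_ltn h.
    by rewrite mul1n !mul0n add0n addn0.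
  - have -> : j = i by apply: val_inj.
    by rewrite eqxx mul0n mul1n add0n.
under eq_bigr do under eq_bigr do rewrite E.
under eq_bigr do rewrite !big_split /=.
rewrite !big_split /= [X in _ + X + _]exchange_big /=.
have -> : \sum_(i < M) \sum_(i0 < M) (i0 == i) * (f i * f i0) = \sum_(i < M) f i * f i.
  apply: eq_bigr => i _; rewrite (bigD1 i) //= eqxx mul1n big1 ?addn0 // => j /negbTE ->.
  by rewrite mul0n.
by rewrite addnC mul2n -addnn.
Qed.
Section Gen.
Variables (M : nat) (adj : rel 'I_M) (adjS : symmetric adj).

Lemma restr_sym m : symmetric (restr adj m).
Proof. by move=> x y; rewrite /restr adjS; case: (x < m)%N; case: (y < m)%N; rewrite ?andbT ?andbF. Qed.

Lemma reach (l x m : 'I_M) : (l < x)%N -> fillP adj l x -> (l < m)%N ->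
  exists2 w : 'I_M, adj x w & (w <= l)%N && connect (restr adj m) l w.
Proof.
move=> lx; rewrite /fillP lx /=; case/orP.
  by move/eqP=> e; rewrite e ltnn in lx.
move=> H lm; case/orP: H => [alx|].
  by exists l; rewrite 1?adjS // leqnn connect0.
case/existsP=> u /existsP [v] /and5P [alu ul vl cuv avx].
exists v; first by rewrite adjS.
rewrite ltnW //=; apply: (connect_trans (y := u)).
  by apply: connect1; rewrite /restr alu lm (ltn_trans ul lm).
move: cuv; apply: connect_sub => a b /and3P [ab am bm].
by apply: connect1; rewrite /restr ab (ltn_trans am lm) (ltn_trans bm lm).
Qed.

Lemma fill_closure (l m j : 'I_M) : (l < m)%N -> (m < j)%N ->
  fillP adj l m -> fillP adj l j -> fillP adj m j.
Proof.
move=> lm mj flm flj.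
have [w1 a1 /andP [w1l c1]] := reach lm flm lm.
have [w2 a2 /andP [w2l c2]] := reach (ltn_trans lm mj) flj lm.
rewrite /fillP mj /=; apply/orP; right; apply/orP; right.
apply/existsP; exists w1; apply/existsP; exists w2.
rewrite a1 (leq_ltn_trans w1l lm) (leq_ltn_trans w2l lm) adjS a2 andbT /=.
apply: (connect_trans (y := l)) => //.
by rewrite (sym_connect_sym (@restr_sym m)).
Qed.

Lemma card_sum (P : pred 'I_M) : #|[set x | P x]| = \sum_(x < M) nat_of_bool (P x).
Proof. by rewrite -sum1dep_card big_mkcond; apply: eq_bigr => x _; case: (P x). Qed.

Definition cc (l : 'I_M) := #|[set j : 'I_M | (l < j)%N && fillP adj l j]|.

Lemma cost_ge : \sum_(l < M) cc l ^ 2 <= chol_cost adj.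
Proof.
pose f (l x : 'I_M) := nat_of_bool ((l < x)%N && fillP adj l x).
have Hc : forall l, cc l ^ 2 = cc l + 2 * \sum_(m < M) \sum_(j < M) nat_of_bool (m < j)%N * (f l m * f l j).
  move=> l; rewrite /cc card_sum sq_sum; congr (_ + _).
  by apply: eq_bigr => x _; rewrite /f; case: (_ && _).
under eq_bigr do rewrite Hc.
rewrite big_split /= -big_distrr /=.
rewrite /chol_cost.
have step1 : forall m : 'I_M,
   cc m + 2 * \sum_(j < M) \sum_(l < M) nat_of_bool ((m < j)%N && fillP adj m j) *
        nat_of_bool [&& (l < m)%N, fillP adj l j & fillP adj l m]
   <= 1 + 2 * #|[set l : 'I_M | (l < m)%N && fillP adj l m]| +
      \sum_(j < M | (m < j)%N && fillP adj m j)
        (1 + 2 * #|[set l : 'I_M | [&& (l < m)%N, fillP adj l j & fillP adj l m]]|).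
  move=> m; rewrite big_split /= sum1dep_card -big_distrr /= -/(cc m).
  apply: leq_trans (leq_addl _ _); rewrite leq_add2l leq_mul2l /=; apply: eq_leq; rewrite [RHS]big_mkcond /=.
  apply: eq_bigr => j _; rewrite card_sum.
  by case: (_ && _); [under eq_bigr do rewrite mul1n | rewrite big1].
refine (leq_trans _ (leq_sum _ _)); last by move=> m _; exact: step1.
rewrite big_split /= -big_distrr /= leq_add2l leq_mul2l /=.
under [X in _ <= X]eq_bigr do rewrite exchange_big.
rewrite [X in _ <= X]exchange_big /=.
apply: leq_sum => l _; apply: leq_sum => m _; apply: leq_sum => j _.
rewrite /f.
case: (boolP (m < j)%N) => mj //=.
case: (boolP ((l < m)%N && fillP adj l m)) => /= lm; last by rewrite muln0.
case: (boolP ((l < j)%N && fillP adj l j)) => /= lj; last by rewrite muln0.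
case/andP: lm => lm flm; case/andP: lj => lj flj.
by rewrite (fill_closure lm mj flm flj) lm flj flm.
Qed.
End Gen.
Lemma cs_nat (M : nat) (c : 'I_M -> nat) :
  (\sum_(i < M) c i) ^ 2 <= M * \sum_(i < M) c i ^ 2.
Proof.
rewrite -(leq_pmul2l (isT : 0 < 2)) expnS expn1 big_distrlr /=.
have H : forall i j : 'I_M, 2 * (c i * c j) <= c i ^ 2 + c j ^ 2.
  by move=> i j; case: (nat_Cauchy (c i) (c j)).
rewrite big_distrr /=.
apply: (@leq_trans (\sum_(i < M) \sum_(j < M) (c i ^ 2 + c j ^ 2))).
  apply: leq_sum => i _; rewrite big_distrr /=; apply: leq_sum => j _; apply: H.
rewrite [X in X <= _](eq_bigr (fun i => M * c i ^ 2 + \sum_(j < M) c j ^ 2)); last first.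
  by move=> i _; rewrite big_split /= sum_nat_const card_ord.
rewrite big_split /= -big_distrr /= sum_nat_const card_ord.
lia.
Qed.

Lemma card_sumG (T : finType) (P : pred T) : #|[set x | P x]| = \sum_x nat_of_bool (P x).
Proof. by rewrite -sum1dep_card big_mkcond; apply: eq_bigr => x _; case: (P x). Qed.

Lemma edges_le (R : realFieldType) (M : nat) (Q : 'M[R]_M)
  (QS : forall u v, Q u v = Q v u) (s : {perm 'I_M}) :
  num_edges Q <= \sum_(l < M) cc (adjQ Q s) l.
Proof.
pose adj := adjQ Q s.
pose B := [set kl : 'I_M * 'I_M | (kl.1 < kl.2)%N && fillP adj kl.1 kl.2].
have -> : \sum_(l < M) cc adj l = #|B|.
  rewrite card_sumG -(pair_bigA _ (fun l j : 'I_M => nat_of_bool ((l < j)%N && fillP adj l j))) /=.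
  apply: eq_bigr => l _.
  by rewrite /cc card_sumG.
pose g (uv : 'I_M * 'I_M) := let a := (s^-1)%g uv.1 in let b := (s^-1)%g uv.2 in
   if (a < b)%N then (a, b) else (b, a).
rewrite /num_edges -(card_in_imset (f := g)).
  apply: subset_leq_card; apply/subsetP => kl /imsetP [[u v]].
  rewrite inE /= => /andP [uv Quv] ->.
  have ab : (s^-1)%g u != (s^-1)%g v.
    by apply: contraTneq uv => /perm_inj ->; rewrite ltnn.
  have fadj : forall x y : 'I_M, (x < y)%N -> adj x y -> fillP adj x y.
    by move=> x y xy axy; rewrite /fillP xy axy orbT.
  have aab : adj ((s^-1)%g u) ((s^-1)%g v) by rewrite /adj /adjQ ab !permKV Quv.
  have aba : adj ((s^-1)%g v) ((s^-1)%g u) by rewrite /adj /adjQ eq_sym ab !permKV QS Quv.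
  rewrite /g /=; case: (ltngtP ((s^-1)%g u) ((s^-1)%g v)) => h; rewrite inE /= h /=.
  - exact: fadj.
  - exact: fadj.
  - by move: ab; rewrite -val_eqE /= h eqxx.
move=> [u v] [u' v']; rewrite !inE /= => /andP [uv _] /andP [uv' _]; rewrite /g /=.
have neq : forall x y : 'I_M, (x < y)%N -> nat_of_ord ((s^-1)%g x) <> nat_of_ord ((s^-1)%g y).
  move=> x y xy e; have /perm_inj exy : (s^-1)%g x = (s^-1)%g y by apply: val_inj.
  by rewrite exy ltnn in xy.
case: (ltngtP ((s^-1)%g u) ((s^-1)%g v)) => h1;
case: (ltngtP ((s^-1)%g u') ((s^-1)%g v')) => h2;
try (by exfalso; apply: (neq _ _ uv)); try (by exfalso; apply: (neq _ _ uv'));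
case=> /perm_inj e1 /perm_inj e2; subst; rewrite ?e1 ?e2 //; lia.
Qed.

Lemma Qsym (I1 I2 N : nat) (i1 : 'I_N -> 'I_I1) (i2 : 'I_N -> 'I_I2)
  (R : realFieldType) (tau tau1 tau2 Tpr : R) (u v : 'I_(1 + I1 + I2)) :
  Qmat i1 i2 tau tau1 tau2 Tpr u v = Qmat i1 i2 tau tau1 tau2 Tpr v u.
Proof.
rewrite !mxE /Qentry.
case: (blk I1 u) => [|[|[|?]]]; case: (blk I1 v) => [|[|[|?]]] //=;
by case: (eqVneq (u : nat) v) => [->|h]; rewrite // eq_sym (negbTE h).
Qed.

From mathcomp Require Import ring lra.
Import GRing.Theory Num.Theory.
Local Open Scope ring_scope.

Theorem proposition2 (R : realFieldType) (c1 : R) (hc1 : 0 < c1) :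
  exists c : R, 0 < c /\
  forall (c2 : R) (I1 I2 N : nat) (i1 : 'I_N -> 'I_I1) (i2 : 'I_N -> 'I_I2)
         (tau tau1 tau2 Tpr : R),
    c1 <= c2 ->
    0 < tau -> 0 < tau1 -> 0 < tau2 -> 0 < Tpr ->
    (* balanced levels: n^(k)_i = N / I_k *)
    (forall i : 'I_I1, (cnt1 i1 i * I1 = N)%N) ->
    (forall i : 'I_I2, (cnt2 i2 i * I2 = N)%N) ->
    c1 * N%:R <= (num_edges (Qmat i1 i2 tau tau1 tau2 Tpr))%:R ->
    (num_edges (Qmat i1 i2 tau tau1 tau2 Tpr))%:R <= c2 * N%:R ->
    forall s : {perm 'I_(1 + I1 + I2)},
      c * N%:R * (2 * N%:R / (I1 + I2)%:R)
        <= (chol_cost (adjQ (Qmat i1 i2 tau tau1 tau2 Tpr) s))%:R.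
Proof.
exists (c1 ^+ 2 / 4); split; first by apply: divr_gt0; [apply: exprn_gt0 | ].
move=> c2 I1 I2 N i1 i2 tau tau1 tau2 Tpr _ _ _ _ _ _ _ hE _ s.
set Q := Qmat i1 i2 tau tau1 tau2 Tpr.
set adj := adjQ Q s.
have QS : forall u v, Q u v = Q v u by move=> u v; exact: Qsym.
have adjS : symmetric adj.
  by move=> x y; rewrite /adj /adjQ eq_sym QS.
have h1 := cost_ge adjS.
have h2 := cs_nat (cc adj).
have h3 := edges_le QS s.
set E := num_edges Q in hE h3.
set C := chol_cost adj in h1 *.
set S := (\sum_(l < _) cc adj l)%N in h2 h3.
set T := (\sum_(l < _) cc adj l ^ 2)%N in h1 h2.
have key : (E ^ 2 <= (1 + I1 + I2) * C)%N.
  apply: leq_trans (leq_trans h2 _); first by rewrite leq_exp2r.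
  by rewrite leq_mul2l h1 orbT.
have keyR : (E%:R ^+ 2 <= (1 + (I1 + I2))%:R * C%:R :> R).
  by rewrite -natrX -natrM ler_nat addnA.
case: (posnP (I1 + I2)) => hp.
  by rewrite hp invr0 !mulr0.
set P := (I1 + I2)%:R : R.
have Pge1 : 1 <= P by rewrite /P ler1n.
rewrite natrD in keyR; fold P in keyR.
have P0 : 0 < P by lra.
have Nge0 : 0 <= (N%:R : R) by [].
have -> : c1 ^+ 2 / 4 * N%:R * (2 * N%:R / P) = (c1 * N%:R) ^+ 2 / (2 * P).
  by field; rewrite -natrD; apply: lt0r_neq0.
rewrite ler_pdivrMr; last by lra.
have x0 : 0 <= c1 * N%:R by apply: mulr_ge0; lra.
have hx : (c1 * N%:R) ^+ 2 <= E%:R ^+ 2 by rewrite !expr2; nra.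
have C0 : 0 <= (C%:R : R) by [].
nra.
Qed.
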